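(* Let $\mathcal H$ be an $n$-dimensional Hilbert space and $N\ge n$. Then: (i) $\epsilon^{(1)}=\frac{n}{N}$, and $\mathcal F^{(1)}=\{(F,G): (F,G)\text{ is an }(N,n)\text{ dual pair with } \|f_i\|\,\|g_i\|=\frac nN \text{ for all } 1\le i\le N\}$. (ii) If $F$ is a tight frame for $\mathcal H$ with $N$ elements, then $(F,S_F^{-1}F)\in\mathcal F^{(1)}$ if and only if $F$ is an equal norm frame.
   Context: $\mathcal H$ is a complex Hilbert space of finite dimension $n$, inner product linear in the first argument. A finite sequence $F=\{f_i\}_{i=1}^N$ in $\mathcal H$ is a frame if there are constants $0<A\le B$ with $A\|f\|^2\le\sum_{i=1}^N|\langle f,f_i\rangle|^2\le B\|f\|^2$ for all $f\in\mathcal H$; it is tight if one can take $A=B$, and equal norm if $\|f_i\|$ is independent of $i$. The frame operator is $S_F f=\sum_{i=1}^N\langle f,f_i\rangle f_i$ (invertible, positive), and the canonical dual is $S_F^{-1}F=\{S_F^{-1}f_i\}_{i=1}^N$. A sequence $G=\{g_i\}_{i=1}^N$ is a dual of the frame $F$ if $f=\sum_{i=1}^N\langle f,g_i\rangle f_i$ for all $f\in\mathcal H$; then $(F,G)$ is called an $(N,n)$ dual pair. For $1\le m\le N$, $\mathcal A_m$ is the set of $m$-element subsets $\Lambda\subseteq\{1,\dots,N\}$, and the error operator is $E_{\Lambda,F,G}f=\sum_{i\in\Lambda}\langle f,f_i\rangle g_i$. With $\|T\|_{\mathcal F}=\sqrt{\operatorname{tr}(T^*T)}$ the Frobenius norm,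 set $\epsilon^{(m)}_{F,G}=\max_{\Lambda\in\mathcal A_m}\|E_{\Lambda,F,G}\|_{\mathcal F}$; $\epsilon^{(1)}=\inf\{\epsilon^{(1)}_{F,G}: (F,G)\text{ an }(N,n)\text{ dual pair for }\mathcal H\}$; $\mathcal F^{(1)}=\{(F,G):\epsilon^{(1)}_{F,G}=\epsilon^{(1)}\}$; and for $m>1$, $\epsilon^{(m)}=\inf\{\epsilon^{(m)}_{F,G}:(F,G)\in\mathcal F^{(m-1)}\}$, $\mathcal F^{(m)}=\{(F,G)\in\mathcal F^{(m-1)}:\epsilon^{(m)}_{F,G}=\epsilon^{(m)}\}$. *)

(* Defs.v *)
From HB Require Import structures.
From mathcomp Require Import all_boot all_order all_algebra.
From mathcomp Require Import all_classical all_reals.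
From mathcomp Require Import complex.
Set Implicit Arguments. Unset Strict Implicit. Unset Printing Implicit Defensive.
Import Order.TTheory GRing.Theory Num.Theory.
Local Open Scope ring_scope.

Section Frames.
Variable R : realType.
Local Notation C := R[i].

(* The Hilbert space H = C^n, vectors are column vectors. *)
(* inner product, linear in the first argument *)
Definition inner (n : nat) (x y : 'cV[C]_n) : C :=
  \sum_(k < n) x k 0 * conjc (y k 0).

Definition vnorm (n : nat) (x : 'cV[C]_n) : R :=
  Num.sqrt (complex.Re (inner x x)).

Definition adj (m p : nat) (T : 'M[C]_(m, p)) : 'M[C]_(p, m) :=
  map_mx (@conjc R) T^T.

(* Frobenius norm sqrt(tr(T^* T)) (the trace is real and nonnegative) *)
Definition frob (n : nat) (T : 'M[C]_n) : R :=
  Num.sqrt (complex.Re (\tr (adj T *m T))).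

Definition fseq (N n : nat) := 'I_N -> 'cV[C]_n.

Definition is_frame (N n : nat) (F : fseq N n) : Prop :=
  exists A B : R, 0 < A /\ A <= B /\
    forall f : 'cV[C]_n,
      A * vnorm f ^+ 2 <= \sum_(i < N) Normc.normc (inner f (F i)) ^+ 2 /\
      \sum_(i < N) Normc.normc (inner f (F i)) ^+ 2 <= B * vnorm f ^+ 2.

Definition is_tight_frame (N n : nat) (F : fseq N n) : Prop :=
  exists A : R, 0 < A /\
    forall f : 'cV[C]_n,
      \sum_(i < N) Normc.normc (inner f (F i)) ^+ 2 = A * vnorm f ^+ 2.

Definition equal_norm (N n : nat) (F : fseq N n) : Prop :=
  exists c : R, forall i, vnorm (F i) = c.

(* frame operator S_F, as the matrix of f |-> sum_i <f,f_i> f_i *)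
Definition frame_op (N n : nat) (F : fseq N n) : 'M[C]_n :=
  \sum_(i < N) F i *m adj (F i).

Definition canon_dual (N n : nat) (F : fseq N n) : fseq N n :=
  fun i => invmx (frame_op F) *m F i.

Definition is_dual (N n : nat) (F G : fseq N n) : Prop :=
  forall f : 'cV[C]_n, f = \sum_(i < N) inner f (G i) *: F i.

Definition dual_pair (N n : nat) (F G : fseq N n) : Prop :=
  is_frame F /\ is_dual F G.

(* error operator E_{Lambda,F,G}, as the matrix of f |-> sum_{i in L} <f,f_i> g_i *)
Definition err_op (N n : nat) (L : {set 'I_N}) (F G : fseq N n) : 'M[C]_n :=
  \sum_(i in L) G i *m adj (F i).

Definition eps_FG (N n : nat) (m : nat) (F G : fseq N n) : R :=
  \big[Num.max/0]_(L : {set 'I_N} | #|L| == m) frob (err_op L F G).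

Definition eps1 (N n : nat) : R :=
  inf [set e : R | exists F G : fseq N n, dual_pair F G /\ e = eps_FG 1 F G].

Definition optimal1 (N n : nat) (F G : fseq N n) : Prop :=
  dual_pair F G /\ eps_FG 1 F G = eps1 N n.

End Frames.

(* Main.v *)
Require Import Defs.
From HB Require Import structures.
From mathcomp Require Import all_boot all_order all_algebra.
From mathcomp Require Import all_classical all_reals.
From mathcomp Require Import complex.
From mathcomp Require Import cyclic separable cyclotomic.
From mathcomp Require Import ring lra.
Set Implicit Arguments. Unset Strict Implicit.
Import Order.TTheory GRing.Theory Num.Theory.
Local Open Scope ring_scope.

Section Aux.
Variable R : realType.
Local Notation C := R[i].
Local Notation "x %:C" := (real_complex R x) (at level 1, format "x %:C").
Local Notation ReC := (@complex.Re R).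

Lemma prim_root_ex (N : nat) : (N > 0)%N -> {z : C | N.-primitive_root z}.
Proof.
pose p : {poly C} := 'X^N - 1; have [r Dp] := closed_field_poly_normal p.
move=> n_gt0; apply/sigW; rewrite (monicP _) ?monicXnsubC // scale1r in Dp.
have rn1: all N.-unity_root r by apply/allP=> z; rewrite -root_prod_XsubC -Dp.
have sz_r: (N < (size r).+1)%N.
  by rewrite -(size_prod_XsubC r id) -Dp size_XnsubC.
have [|z] := hasP (has_prim_root n_gt0 rn1 _ sz_r); last by exists z.
by rewrite -separable_prod_XsubC -Dp separable_Xn_sub_1 // pnatr_eq0 -lt0n.
Qed.

Lemma cjM (x y : C) : conjc (x * y) = conjc x * conjc y.
Proof. by case: x => a b; case: y => c d; rewrite /conjc /=; apply/eqP; rewrite eq_complex /=; apply/andP; split; apply/eqP; ring. Qed.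
Lemma cjD (x y : C) : conjc (x + y) = conjc x + conjc y.
Proof. by case: x => a b; case: y => c d; rewrite /conjc /=; apply/eqP; rewrite eq_complex /=; apply/andP; split; apply/eqP; ring. Qed.
Lemma cjK (x : C) : conjc (conjc x) = x.
Proof. by case: x => a b; rewrite /conjc /= opprK. Qed.
Lemma cj0 : conjc (0 : C) = 0.
Proof. by rewrite /conjc /= oppr0. Qed.
Lemma cj_sum (N : nat) (f : 'I_N -> C) : conjc (\sum_i f i) = \sum_i conjc (f i).
Proof. elim/big_ind2: _ => //; [exact: cj0 | by move=> a x b y <- <-; rewrite cjD]. Qed.

Lemma adjM (m p q : nat) (A : 'M[C]_(m, p)) (B : 'M[C]_(p, q)) :
  adj (A *m B) = adj B *m adj A.
Proof. by apply/matrixP=> i j; rewrite !mxE cj_sum; apply: eq_bigr => k _; rewrite !mxE cjM mulrC. Qed.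

Lemma adjK (m p : nat) (A : 'M[C]_(m, p)) : adj (adj A) = A.
Proof. by apply/matrixP=> i j; rewrite !mxE cjK. Qed.

Lemma adjD (m p : nat) (A B : 'M[C]_(m, p)) : adj (A + B) = adj A + adj B.
Proof. by apply/matrixP=> i j; rewrite !mxE cjD. Qed.

Lemma adjZ (m p : nat) c (A : 'M[C]_(m, p)) : adj (c *: A) = conjc c *: adj A.
Proof. by apply/matrixP=> i j; rewrite !mxE cjM. Qed.

Lemma adj_sum (m p N : nat) (F : 'I_N -> 'M[C]_(m, p)) :
  adj (\sum_i F i) = \sum_i adj (F i).
Proof.
elim/big_ind2: _ => //; first by apply/matrixP=> i j; rewrite !mxE cj0.
by move=> x A y B <- <-; rewrite adjD.
Qed.

Lemma innerE n (x y : 'cV[C]_n) : inner x y = (adj y *m x) 0 0.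
Proof. by rewrite /inner !mxE; apply: eq_bigr => k _; rewrite !mxE mulrC. Qed.

Lemma tr_inner n (x y : 'cV[C]_n) : \tr (x *m adj y) = inner x y.
Proof.
by rewrite mxtrace_mulC innerE /mxtrace big_ord1.
Qed.

Lemma conjc_re (r : R) : conjc (r%:C) = r%:C.
Proof. by rewrite /conjc /= oppr0. Qed.

Lemma inner_self n (x : 'cV[C]_n) :
  inner x x = (\sum_k (Normc.normc (x k 0)) ^+ 2)%:C.
Proof.
rewrite /inner rmorph_sum; apply: eq_bigr => k _.
case: (x k 0) => a b; rewrite /conjc /= /Normc.normc /=.
rewrite sqr_sqrtr ?addr_ge0 ?sqr_ge0 //.
apply/eqP; rewrite eq_complex /=; apply/andP; split; apply/eqP.
  by rewrite !expr2; ring.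
by ring.
Qed.

Lemma Re_inner_self_ge0 n (x : 'cV[C]_n) : 0 <= ReC (inner x x).
Proof. by rewrite inner_self /= sumr_ge0 // => k _; rewrite sqr_ge0. Qed.

Lemma vnorm_ge0 n (x : 'cV[C]_n) : 0 <= vnorm x.
Proof. exact: sqrtr_ge0. Qed.

Lemma vnorm_sq n (x : 'cV[C]_n) : vnorm x ^+ 2 = ReC (inner x x).
Proof. by rewrite /vnorm sqr_sqrtr // Re_inner_self_ge0. Qed.

Lemma inner_selfE n (x : 'cV[C]_n) : inner x x = (vnorm x ^+ 2)%:C.
Proof. by rewrite vnorm_sq inner_self. Qed.

Lemma dual_sumE N n (F G : fseq R N n) (f : 'cV[C]_n) :
  \sum_(i < N) inner f (G i) *: F i = (\sum_i F i *m adj (G i)) *m f.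
Proof.
rewrite mulmx_suml; apply: eq_bigr => i _.
by rewrite -mulmxA [adj _ *m f]mx11_scalar mul_mx_scalar innerE.
Qed.

Lemma is_dualP N n (F G : fseq R N n) :
  is_dual F G <-> \sum_i F i *m adj (G i) = 1%:M.
Proof.
rewrite /is_dual; split=> [H|H f]; last by rewrite dual_sumE H mul1mx.
apply/matrixP=> a b; have := H (delta_mx b 0); rewrite dual_sumE => E.
have := congr1 (fun M : 'cV[C]_n => M a 0) E.
rewrite -colE !mxE => <-; by rewrite andbT.
Qed.

Lemma innerDl n (x y z : 'cV[C]_n) : inner (x + y) z = inner x z + inner y z.
Proof. by rewrite /inner -big_split; apply: eq_bigr => k _; rewrite !mxE mulrDl. Qed.

Lemma innerDr n (x y z : 'cV[C]_n) : inner z (x + y) = inner z x + inner z y.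
Proof. by rewrite /inner -big_split; apply: eq_bigr => k _; rewrite !mxE cjD mulrDr. Qed.

Lemma innerZl n c (x z : 'cV[C]_n) : inner (c *: x) z = c * inner x z.
Proof. by rewrite /inner mulr_sumr; apply: eq_bigr => k _; rewrite !mxE mulrA. Qed.

Lemma innerZr n c (x z : 'cV[C]_n) : inner z (c *: x) = conjc c * inner z x.
Proof. by rewrite /inner mulr_sumr; apply: eq_bigr => k _; rewrite !mxE cjM mulrCA. Qed.

Lemma inner_conj n (x y : 'cV[C]_n) : inner y x = conjc (inner x y).
Proof.
rewrite /inner cj_sum; apply: eq_bigr => k _.
by rewrite cjM cjK mulrC.
Qed.

Lemma ReC_conj (z : C) : ReC (conjc z) = ReC z.
Proof. by case: z. Qed.

Lemma ReC_mulr (r : R) (z : C) : ReC (r%:C * z) = r * ReC z.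
Proof. by case: z => a b /=; rewrite mul0r subr0. Qed.

Lemma ReC_add (z w : C) : ReC (z + w) = ReC z + ReC w.
Proof. by case: z; case: w. Qed.

Lemma quad_expand n (x y : 'cV[C]_n) (r : R) :
  ReC (inner (x + r%:C *: y) (x + r%:C *: y)) =
  ReC (inner x x) + 2 * r * ReC (inner x y) + r ^+ 2 * ReC (inner y y).
Proof.
rewrite !innerDl !innerDr !innerZl !innerZr conjc_re (inner_conj x y).
rewrite !ReC_add !mulrA -rmorphM !ReC_mulr ReC_conj; ring.
Qed.

Lemma disc_le (A B D : R) : 0 <= A -> 0 <= D ->
  (forall r : R, 0 <= A + 2 * r * B + r ^+ 2 * D) ->
  B <= Num.sqrt A * Num.sqrt D.
Proof.
move=> A0 D0 H; rewrite -sqrtrM //.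
have HB2 : B ^+ 2 <= A * D.
  have [D0'|Dp] := eqVneq D 0.
    have B0 : B = 0.
      apply/eqP/negPn/negP => Bn.
      have := H (- (A + 1) / (2 * B)); rewrite D0' mulr0 addr0.
      have -> : 2 * (- (A + 1) / (2 * B)) * B = - (A + 1).
        field; exact: Bn.
      move=> h; lra.
    by rewrite B0 D0' expr2 !mulr0.
  have Dpos : 0 < D by rewrite lt_def Dp D0.
  have := H (- B / D).
  have -> : A + 2 * (- B / D) * B + (- B / D) ^+ 2 * D = A - B ^+ 2 / D.
    by field.
  rewrite subr_ge0 ler_pdivrMr // => h; by rewrite mulrC.
apply: (le_trans (ler_norm B)).
by rewrite -sqrtr_sqr ler_sqrt // mulr_ge0.
Qed.

Lemma CS n (x y : 'cV[C]_n) : ReC (inner x y) <= vnorm x * vnorm y.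
Proof.
apply: disc_le; rewrite ?Re_inner_self_ge0 // => r.
rewrite -quad_expand; exact: Re_inner_self_ge0.
Qed.

Lemma frob_rank1 n (f g : 'cV[C]_n) : frob (g *m adj f) = vnorm f * vnorm g.
Proof.
rewrite /frob adjM adjK !mulmxA -[f *m adj g *m g]mulmxA.
rewrite [adj g *m g]mx11_scalar -innerE mul_mx_scalar -scalemxAl mxtraceZ.
rewrite tr_inner !inner_selfE -rmorphM /=.
by rewrite sqrtrM ?sqr_ge0 // !sqrtr_sqr !ger0_norm ?vnorm_ge0 // mulrC.
Qed.

Definition pp N n (F G : fseq R N n) (i : 'I_N) := vnorm (F i) * vnorm (G i).

Lemma err_op1 N n (F G : fseq R N n) i :
  frob (err_op [set i] F G) = pp F G i.
Proof. by rewrite /err_op big_set1 frob_rank1. Qed.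

Lemma eps_ge N n (F G : fseq R N n) i : pp F G i <= eps_FG 1 F G.
Proof.
rewrite /eps_FG -err_op1.
by apply: (le_bigmax_cond _ (j := [set i]) (P := fun L => #|L| == 1%N)); rewrite cards1.
Qed.

Lemma eps_ge0 N n (F G : fseq R N n) : 0 <= eps_FG 1 F G.
Proof. exact: bigmax_ge_id. Qed.

Lemma eps_le N n (F G : fseq R N n) c :
  0 <= c -> (forall i, pp F G i <= c) -> eps_FG 1 F G <= c.
Proof.
move=> c0 H; apply: bigmax_le => // L /cards1P [x ->]; by rewrite err_op1.
Qed.

Lemma ReC_sum N (f : 'I_N -> C) : ReC (\sum_i f i) = \sum_i ReC (f i).
Proof. by elim/big_ind2: _ => // a x b y <- <-; rewrite ReC_add. Qed.

Lemma ReC_nat k : ReC (k%:R) = k%:R.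
Proof. by rewrite -(rmorph_nat (real_complex R)). Qed.

Lemma dual_trace N n (F G : fseq R N n) : is_dual F G ->
  n%:R = \sum_i ReC (inner (F i) (G i)).
Proof.
move/is_dualP => H; have := congr1 (@mxtrace _ _) H.
rewrite mxtrace1 raddf_sum /= => E.
by rewrite -ReC_nat -E ReC_sum; apply: eq_bigr => i _; rewrite tr_inner.
Qed.

Lemma sum_pp_ge N n (F G : fseq R N n) : is_dual F G ->
  n%:R <= \sum_i pp F G i.
Proof. by move/dual_trace ->; apply: ler_sum => i _; apply: CS. Qed.

Lemma eps_lb N n (F G : fseq R N n) : is_dual F G ->
  n%:R / N%:R <= eps_FG 1 F G.
Proof.
move=> H; case: N F G H => [|N] F G H.
  by rewrite invr0 mulr0 eps_ge0.
rewrite ler_pdivrMr ?ltr0Sn //; apply: (le_trans (sum_pp_ge H)).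
apply: le_trans (_ : \sum_(i < N.+1) eps_FG 1 F G <= _).
  by apply: ler_sum => i _; apply: eps_ge.
by rewrite sumr_const card_ord mulr_natr.
Qed.

Lemma eps_eq N n (F G : fseq R N n) : is_dual F G ->
  (forall i, pp F G i = n%:R / N%:R) -> eps_FG 1 F G = n%:R / N%:R.
Proof.
move=> D H; apply/eqP; rewrite eq_le eps_lb // andbT.
by apply: eps_le => [|i]; rewrite ?H // divr_ge0 ?ler0n.
Qed.

Lemma opt_pp N n (F G : fseq R N n) : is_dual F G ->
  eps_FG 1 F G = n%:R / N%:R -> forall i, pp F G i = n%:R / N%:R.
Proof.
move=> D E i; have Hle : forall j, pp F G j <= n%:R / N%:R.
  by move=> j; rewrite -E eps_ge.
have N0 : (0 < N)%N := leq_ltn_trans (leq0n i) (ltn_ord i).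
have S0 : \sum_j (n%:R / N%:R - pp F G j) = 0.
  apply/eqP; rewrite eq_le; apply/andP; split; last first.
    by apply: sumr_ge0 => j _; rewrite subr_ge0.
  rewrite sumrB sumr_const card_ord -[_ *+ N]mulr_natr divfK ?pnatr_eq0 -?lt0n //.
  by rewrite subr_le0 sum_pp_ge.
have H0 : forall j : 'I_N, true -> 0 <= n%:R / N%:R - pp F G j.
  by move=> j _; rewrite subr_ge0.
by have /eqP := psumr_eq0P H0 S0 (i := i) isT; rewrite subr_eq0 => /eqP ->.
Qed.

Lemma cj1 : conjc (1 : C) = 1.
Proof. by rewrite /conjc /= oppr0. Qed.

Lemma cjX (x : C) m : conjc (x ^+ m) = conjc x ^+ m.
Proof. by elim: m => [|m IH]; rewrite ?expr0 ?cj1 // !exprS cjM IH. Qed.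

Lemma nsq (z : C) : z * conjc z = (Normc.normc z ^+ 2)%:C.
Proof.
case: z => a b; rewrite /conjc /= /Normc.normc /=.
rewrite sqr_sqrtr ?addr_ge0 ?sqr_ge0 //.
apply/eqP; rewrite eq_complex /=; apply/andP; split; apply/eqP.
  by rewrite !expr2; ring.
by ring.
Qed.

Lemma normcX (z : C) m : Normc.normc (z ^+ m) = Normc.normc z ^+ m.
Proof. by elim: m => [|m IH]; rewrite ?expr0 ?Normc.normc1 // !exprS Normc.normcM IH. Qed.

Lemma om_abs N (w : C) : N.-primitive_root w -> w * conjc w = 1.
Proof.
move=> pw; have N0 := prim_order_gt0 pw.
have h : Normc.normc w ^+ N = 1 by rewrite -normcX prim_expr_order // Normc.normc1.
have /eqP h1 : Normc.normc w == 1.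
  by rewrite -(pexpr_eq1 N0) ?h // /Normc.normc; case: (w) => a b; exact: sqrtr_ge0.
by rewrite nsq h1 expr1n.
Qed.

Lemma om_conj N (w : C) : N.-primitive_root w -> conjc w = w ^+ N.-1.
Proof.
move=> pw; have N0 := prim_order_gt0 pw.
rewrite -[RHS]mulr1 -(om_abs pw) mulrA -exprSr prednK // prim_expr_order // mul1r.
by [].
Qed.

Definition harm (N n : nat) (w : C) : fseq R N n := fun j =>
  (Num.sqrt (N%:R^-1))%:C *: \col_(k < n) w ^+ (j * k).
Arguments harm : clear implicits.

Lemma harm_norm N n (w : C) (pw : N.-primitive_root w) (j : 'I_N) :
  inner (harm N n w j) (harm N n w j) = (n%:R / N%:R)%:C.
Proof.
rewrite /harm innerZl innerZr conjc_re mulrA -rmorphM -expr2 sqr_sqrtr ?invr_ge0 ?ler0n //.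
rewrite /inner (eq_bigr (fun _ => 1)) => [|k _]; last by rewrite !mxE cjX -exprMn (om_abs pw) expr1n.
rewrite sumr_const card_ord -(rmorph_nat (real_complex R)) -rmorphM /=.
by rewrite mulrC.
Qed.

Lemma geo_sum N (w : C) (pw : N.-primitive_root w) (k l : nat) :
  (k < N)%N -> (l < N)%N ->
  \sum_(j < N) (w ^+ (k + N.-1 * l)) ^+ j = if k == l then N%:R else 0.
Proof.
move=> kN lN; have N0 := prim_order_gt0 pw.
have wN := prim_expr_order pw.
case: eqP => [<-|kl].
  have -> : w ^+ (k + N.-1 * k) = 1.
    by rewrite -{1}(mul1n k) -mulnDl add1n prednK // exprM wN expr1n.
  by rewrite (eq_bigr (fun _ => 1)) ?sumr_const ?card_ord // => j _; rewrite expr1n.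
set z := w ^+ _.
have zN : z ^+ N = 1 by rewrite /z -exprM mulnC exprM wN expr1n.
have z1 : z - 1 != 0.
  rewrite subr_eq0; apply/eqP => z1; apply: kl.
  have : w ^+ l * z = w ^+ k.
    rewrite /z -exprD addnCA -{1}(mul1n l) -mulnDl add1n prednK //.
    by rewrite exprD exprM wN expr1n mulr1.
  rewrite z1 mulr1 => /eqP; rewrite (eq_prim_root_expr pw) !modn_small // => /eqP.
  by [].
have := subrX1 z N; rewrite zN subrr => /esym/eqP; rewrite mulf_eq0 (negPf z1) /=.
by move/eqP.
Qed.

Lemma harm_parseval N n (w : C) (pw : N.-primitive_root w) : (n <= N)%N ->
  \sum_(j < N) harm N n w j *m adj (harm N n w j) = 1%:M.
Proof.
move=> nN; have N0 := prim_order_gt0 pw.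
apply/matrixP => k l; rewrite summxE.
have kN : (k < N)%N := leq_trans (ltn_ord k) nN.
have lN : (l < N)%N := leq_trans (ltn_ord l) nN.
rewrite (eq_bigr (fun j : 'I_N => (N%:R^-1)%:C * (w ^+ (k + N.-1 * l)) ^+ j)).
  rewrite -mulr_sumr geo_sum // !mxE -(inj_eq val_inj) /=.
  case: eqP => _; last by rewrite mulr0.
  by rewrite -(rmorph_nat (real_complex R)) -rmorphM /= mulVf ?pnatr_eq0 -?lt0n.
move=> j _; rewrite !mxE big_ord1 !mxE cjM cjX conjc_re (om_conj pw).
rewrite mulrCA -!mulrA -exprM -exprD mulrA -rmorphM -expr2 sqr_sqrtr ?invr_ge0 ?ler0n //.
congr (_ * _); rewrite -exprM; congr (_ ^+ _).
by rewrite mulnDl mulnC; congr (_ + _); rewrite mulnCA mulnC.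
Qed.

Lemma inner_suml N n (x : 'I_N -> 'cV[C]_n) z :
  inner (\sum_i x i) z = \sum_i inner (x i) z.
Proof.
elim/big_ind2: _ => [|a u b v <- <-|]; last by [].
  by rewrite /inner big1 // => k _; rewrite mxE mul0r.
by rewrite innerDl.
Qed.

Lemma frame_quad N n (F : fseq R N n) f :
  (\sum_i Normc.normc (inner f (F i)) ^+ 2)%:C = inner (frame_op F *m f) f.
Proof.
rewrite /frame_op -dual_sumE inner_suml rmorph_sum /=; apply: eq_bigr => i _.
by rewrite -nsq innerZl -inner_conj.
Qed.

Lemma parseval_frame N n (F : fseq R N n) : frame_op F = 1%:M -> is_frame F.
Proof.
move=> S1; exists 1, 1; split; first exact: ltr01; split => // f.
have -> : \sum_i Normc.normc (inner f (F i)) ^+ 2 = vnorm f ^+ 2.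
  by apply: complexI; rewrite frame_quad S1 mul1mx inner_selfE.
by rewrite mul1r lexx.
Qed.

Lemma exists_opt N n : (n <= N)%N ->
  exists F G : fseq R N n, dual_pair F G /\ eps_FG 1 F G = n%:R / N%:R.
Proof.
move=> nN; case: (posnP N) => [N0|N0].
  subst N; move: nN; rewrite leqn0 => /eqP n0; subst n.
  exists (fun _ => 0), (fun _ => 0).
  have S1 : frame_op (fun _ : 'I_0 => (0 : 'cV[C]_0)) = 1%:M by apply/matrixP => [[]].
  split; first split.
  - exact: parseval_frame.
  - by apply/is_dualP.
  by apply/eqP; rewrite mul0r eq_le eps_ge0 andbT; apply: eps_le => // [[]].
have [w pw] := prim_root_ex N0.
have S1 := harm_parseval pw nN.
exists (harm N n w), (harm N n w); split; first split.
- exact: parseval_frame.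
- exact/is_dualP.
apply: eps_eq; first exact/is_dualP.
move=> i; rewrite /pp -expr2 vnorm_sq harm_norm //.
Qed.

Lemma eps1_val N n : (n <= N)%N -> eps1 R N n = n%:R / N%:R.
Proof.
move=> nN; have [F [G [D E]]] := exists_opt nN.
rewrite /eps1; apply/eqP; rewrite eq_le; apply/andP; split.
  apply: ge_inf.
    exists (n%:R / N%:R) => e [F' [G' [[_ D'] ->]]]; exact: eps_lb.
  by exists F, G; split => //; rewrite E.
apply: lb_le_inf.
  by exists (n%:R / N%:R), F, G; split => //; rewrite E.
by move=> e [F' [G' [[_ D'] ->]]]; exact: eps_lb.
Qed.

Lemma cj_i : conjc ('i%C : C) = - 'i%C.
Proof. by apply/eqP; rewrite eq_complex /= oppr0 !eqxx. Qed.

Lemma polar n (T : 'M[C]_n) :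
  (forall f, inner (T *m f) f = 0) -> T = 0.
Proof.
move=> H.
have key : forall (x y : 'cV[C]_n) (c : C),
    conjc c * inner (T *m x) y + c * inner (T *m y) x = 0.
  move=> x y c; have := H (x + c *: y).
  rewrite mulmxDr -scalemxAr !innerDl !innerDr !innerZl !innerZr !H.
  by rewrite !mulr0 !addr0 add0r addrC.
have B0 : forall x y : 'cV[C]_n, inner (T *m x) y = 0.
  move=> x y; have h1 := key x y 1; have h2 := key x y 'i%C.
  rewrite cj1 !mul1r in h1; rewrite cj_i in h2.
  have e : inner (T *m y) x = - inner (T *m x) y by apply/eqP; rewrite -addr_eq0 addrC h1.
  rewrite e mulrN mulNr -opprD in h2; move/eqP: h2.
  rewrite oppr_eq0 -mulr2n -mulr_natr mulf_eq0 pnatr_eq0 orbF mulf_eq0.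
  case/orP => /eqP // i0.
  by move: i0 => /eqP; rewrite eq_complex /= oner_eq0 andbF.
apply/matrixP => a b; rewrite mxE.
have := B0 (delta_mx b 0) (delta_mx a 0); rewrite innerE.
have -> : adj (delta_mx a 0 : 'cV[C]_n) = delta_mx 0 a.
  apply/matrixP => i j; rewrite !mxE (ord1 i) eqxx andbT; case: (j == a); [exact: cj1 | exact: cj0].
by rewrite -rowE -colE !mxE.
Qed.

Lemma tight_op N n (F : fseq R N n) (A : R) :
  (forall f, \sum_i Normc.normc (inner f (F i)) ^+ 2 = A * vnorm f ^+ 2) ->
  frame_op F = (A%:C)%:M.
Proof.
move=> H; apply/eqP; rewrite -subr_eq0; apply/eqP/polar => f.
rewrite mulmxBl innerDl -scaleN1r innerZl -frame_quad H.
by rewrite mul_scalar_mx innerZl inner_selfE rmorphM /= mulN1r subrr.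
Qed.

Lemma vnormZ n (r : R) (x : 'cV[C]_n) : vnorm (r%:C *: x) = `|r| * vnorm x.
Proof.
rewrite /vnorm innerZl innerZr conjc_re mulrA -rmorphM ReC_mulr.
by rewrite sqrtrM ?sqr_ge0 // -expr2 sqrtr_sqr.
Qed.

Lemma partib N n (F G : fseq R N n) : (n <= N)%N ->
  optimal1 F G <->
  (dual_pair F G /\ forall i : 'I_N, vnorm (F i) * vnorm (G i) = n%:R / N%:R).
Proof.
move=> nN; rewrite /optimal1 eps1_val //; split.
  by move=> [[Fr D] E]; split => //; exact: opt_pp.
by move=> [[Fr D] E]; split => //; exact: eps_eq.
Qed.

Lemma partii N n (F : fseq R N n) : (n <= N)%N -> is_tight_frame F ->
  (optimal1 F (canon_dual F) <-> equal_norm F).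
Proof.
move=> nN [A [A0 H]].
have S := tight_op H.
have CD : forall i, canon_dual F i = (A^-1)%:C *: F i.
  by move=> i; rewrite /canon_dual S invmx_scalar mul_scalar_mx fmorphV.
have DP : dual_pair F (canon_dual F).
  split; first by exists A, A; split => //; split => // f; rewrite H lexx.
  apply/is_dualP.
  under eq_bigr => i _ do rewrite CD adjZ -scalemxAr.
  rewrite -scaler_sumr -/(frame_op F) S scale_scalar_mx conjc_re -rmorphM mulVf //.
  by rewrite gt_eqF.
have PP : forall i, vnorm (F i) * vnorm (canon_dual F i) = vnorm (F i) ^+ 2 / A.
  by move=> i; rewrite CD vnormZ ger0_norm ?invr_ge0 ?ltW // mulrCA expr2 mulrC.
have TR : \sum_i vnorm (F i) ^+ 2 = A * n%:R.
  apply: complexI; rewrite rmorph_sum /= rmorphM /= rmorph_nat mulr_natr.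
  have := congr1 (@mxtrace _ _) S; rewrite /frame_op raddf_sum /= mxtrace_scalar => <-.
  by apply: eq_bigr => i _; rewrite tr_inner inner_selfE.
rewrite partib //; split.
  move=> [_ E]; exists (Num.sqrt (A * (n%:R / N%:R))) => i.
  have e : vnorm (F i) ^+ 2 = A * (n%:R / N%:R).
    by rewrite -(E i) PP mulrC divfK // gt_eqF.
  by rewrite -e sqrtr_sqr ger0_norm // vnorm_ge0.
move=> [c Hc]; split => // i; rewrite PP Hc.
have N0 : N%:R != 0 :> R by rewrite pnatr_eq0 -lt0n (leq_ltn_trans (leq0n i) (ltn_ord i)).
have : \sum_(j < N) vnorm (F j) ^+ 2 = c ^+ 2 * N%:R.
  by rewrite (eq_bigr (fun _ => c ^+ 2)) ?sumr_const ?card_ord ?mulr_natr // => j _; rewrite Hc.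
rewrite TR => e.
have -> : c ^+ 2 = A * n%:R / N%:R by rewrite e mulfK.
by field; rewrite N0 gt_eqF.
Qed.
End Aux.

Theorem theorem3p1 (R : realType) (n N : nat) (hnN : (n <= N)%N) :
  (eps1 R N n = n%:R / N%:R /\
   forall F G : fseq R N n,
     optimal1 F G <->
     (dual_pair F G /\ forall i : 'I_N, vnorm (F i) * vnorm (G i) = n%:R / N%:R))
  /\
  (forall F : fseq R N n, is_tight_frame F ->
     (optimal1 F (canon_dual F) <-> equal_norm F)).
Proof.
split; first split.
- exact: eps1_val.
- by move=> F G; apply: partib.
- by move=> F; apply: partii.
Qed.
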